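(* In the two-unicast setting, suppose $k_{1-2}+k_{2-1}\ge\min(k_{12-1},k_{12-2})$ and $k_{1-2}\le k_{1-1}$. Set $R_1^*=k_{1-2}$ and $R_2^*=\min(k_{12-1},k_{12-2})-k_{1-2}$. Let the field $GF(q)$ and the local coding coefficients at the non-source nodes be fixed so that $\mathrm{rank}(H_{ij})=k_{j-i}$ and $\mathrm{rank}([H_{i1}~H_{i2}])=k_{12-i}$ for $i,j\in\{1,2\}$, and let $M_1$ ($k_{1-12}\times R_1^*$) and $M_2$ ($k_{2-12}\times R_2^*$) be full column rank source encoding matrices such that $[H_{i1}M_1~~H_{i2}M_2]$ has full column rank $R_1^*+R_2^*$ for $i=1,2$ (i.e., both terminals can decode both sources at rates $(R_1^*,R_2^* )$). Then every pair of nonnegative integers $(R_1,R_2)$ with $$R_1\le k_{1-1},\qquad R_2\le \min(k_{12-1},k_{12-2})-k_{1-2},\qquad R_1+R_2\le \mathrm{rank}([H_{11}~~H_{12}M_2])$$ is achievable.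
   Context: $G=(V,E)$ is a directed acyclic network with unit-capacity edges (each carrying one symbol of $GF(q)$ per use), sources $s_1,s_2$ (no incoming edges), terminals $t_1,t_2$ (no outgoing edges); $t_i$ wants the message of $s_i$. $k_{N_1-N_2}$ is the min-cut from $\{s_i:i\in N_1\}$ to $\{t_j:j\in N_2\}$. W.l.o.g. $s_i$ has exactly $k_{i-12}$ outgoing edges and $t_i$ has exactly $k_{12-i}$ incoming edges. For a linear network code over $GF(q)$ with fixed local coefficients at non-source nodes, $H_{ij}$ is the $k_{12-i}\times k_{j-12}$ matrix such that the vector of symbols on the incoming edges of $t_i$ equals $H_{i1}Y_1+H_{i2}Y_2$, where $Y_j$ is the vector of symbols on the outgoing edges of $s_j$; the source encoding is $Y_j=M_jU_j$ with $U_j$ the message vector of $s_j$. $(R_1,R_2)$ is achievable if for some finite field $GF(q)$ there is a linear network code such that, when $s_i$ observes $R_i$ independent symbols of $GF(q)$, $t_1$ uniquely recovers $s_1$'s message and $t_2$ uniquely recovers $s_2$'s message. *)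

(* Defs.v *)
From HB Require Import structures.
From mathcomp Require Import all_boot all_order all_algebra.
Set Implicit Arguments. Unset Strict Implicit. Unset Printing Implicit Defensive.
Import GRing.Theory.

(* A two-unicast network: a finite directed multigraph (edges are a finite
   type with tail/head maps; every edge has unit capacity), two sources and
   two terminals. *)
Record net := Net {
  V : finType;
  E : finType;
  tl : E -> V;
  hd : E -> V;
  s1 : V; s2 : V; t1 : V; t2 : V }.

Section Net.
Variable N : net.

Definition erel (C : {set E N}) : rel (V N) :=
  fun x y => [exists e, (e \notin C) && (tl e == x) && (hd e == y)].

Definition acyclic : Prop :=
  forall e : E N, ~~ connect (erel set0) (hd e) (tl e).

Definition in_edges (v : V N) : {set E N} := [set e | hd e == v].
Definition out_edges (v : V N) : {set E N} := [set e | tl e == v].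

Definition valid_net : Prop :=
  acyclic /\
  in_edges (s1 N) = set0 /\ in_edges (s2 N) = set0 /\
  out_edges (t1 N) = set0 /\ out_edges (t2 N) = set0 /\
  uniq [:: s1 N; s2 N; t1 N; t2 N].

Definition separates (C : {set E N}) (A B : {set V N}) : bool :=
  [forall a in A, forall b in B, ~~ connect (erel C) a b].

(* min-cut from A to B (default #|E| only if no cut exists) *)
Definition mincut (A B : {set V N}) : nat :=
  \big[minn/#|E N|]_(C : {set E N} | separates C A B) #|C|.

(* Linear network code with local coefficients be e' e (coefficient of the
   symbol on incoming edge e' in the symbol sent on edge e, used when
   hd e' = tl e) at non-source nodes.  y gives the symbols put by the sources
   on their outgoing edges.  edge_val computes the symbol carried by each
   edge (the DAG recursion stabilises after #|E| iterations). *)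
Definition code_step (F : finFieldType) (be : E N -> E N -> F) (y : E N -> F)
    (x : E N -> F) : E N -> F :=
  fun e => if (tl e == s1 N) || (tl e == s2 N) then y e
           else (\sum_(e' | hd e' == tl e) be e' e * x e')%R.

Definition edge_val (F : finFieldType) (be : E N -> E N -> F) (y : E N -> F)
  : E N -> F := iter #|E N| (code_step be y) (fun _ => 0%R).

Definition src_in (F : finFieldType) (Y1 : 'cV[F]_#|out_edges (s1 N)|)
    (Y2 : 'cV[F]_#|out_edges (s2 N)|) : E N -> F :=
  fun e => (\sum_b (if enum_val b == e then Y1 b 0 else 0)
          + \sum_b (if enum_val b == e then Y2 b 0 else 0))%R.

Definition rcv (F : finFieldType) (be : E N -> E N -> F) (t : V N) (y : E N -> F)
  : 'cV[F]_#|in_edges t| := \col_a edge_val be y (enum_val a).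

Definition Hmx (F : finFieldType) (be : E N -> E N -> F) (t s : V N)
  : 'M[F]_(#|in_edges t|, #|out_edges s|) :=
  \matrix_(a, b) edge_val be (fun e => ((e == enum_val b)%:R)%R) (enum_val a).

Definition achievable (R1 R2 : nat) : Prop :=
  exists (F : finFieldType) (be : E N -> E N -> F)
         (M1 : 'M[F]_(#|out_edges (s1 N)|, R1)) (M2 : 'M[F]_(#|out_edges (s2 N)|, R2)),
    (forall (U1 U1' : 'cV[F]_R1) (U2 U2' : 'cV[F]_R2),
        rcv be (t1 N) (src_in (M1 *m U1) (M2 *m U2))
          = rcv be (t1 N) (src_in (M1 *m U1') (M2 *m U2')) -> U1 = U1') /\
    (forall (U1 U1' : 'cV[F]_R1) (U2 U2' : 'cV[F]_R2),
        rcv be (t2 N) (src_in (M1 *m U1) (M2 *m U2))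
          = rcv be (t2 N) (src_in (M1 *m U1') (M2 *m U2')) -> U2 = U2').

End Net.

Definition k (N : net) (A B : {set V N}) := mincut A B.

(* Main.v *)
Require Import Defs.
From HB Require Import structures.
From mathcomp Require Import all_boot all_order all_algebra zify ring.
From Stdlib Require Import FunctionalExtensionality.
Set Implicit Arguments. Unset Strict Implicit. Unset Printing Implicit Defensive.
Import GRing.Theory.
Local Open Scope ring_scope.

Section Lin.
Variables (N : net) (F : finFieldType) (be : E N -> E N -> F).

Lemma iter_lin n (a : F) y1 y2 e :
  iter n (code_step be (fun e => a * y1 e + y2 e)) (fun _ => 0) e =
  a * iter n (code_step be y1) (fun _ => 0) e + iter n (code_step be y2) (fun _ => 0) e.
Proof.
elim: n e => [|n IH] e /=; first by rewrite mulr0 addr0.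
rewrite /code_step; case: ifP => // _.
rewrite mulr_sumr -big_split /=; apply: eq_bigr => e' _; rewrite IH; ring.
Qed.

Lemma iter_zero n e : iter n (code_step be (fun _ => 0)) (fun _ => 0) e = 0 :> F.
Proof.
elim: n e => [|n IH] e //=; rewrite /code_step; case: ifP => // _.
by rewrite big1 // => e' _; rewrite IH mulr0.
Qed.

Lemma ev_sum (I : Type) (r : seq I) (P : pred I) (c : I -> F) (f : I -> E N -> F) e0 :
  edge_val be (fun e => \sum_(i <- r | P i) c i * f i e) e0 =
  \sum_(i <- r | P i) c i * edge_val be (f i) e0.
Proof.
rewrite /edge_val; elim: r => [|i r IH].
  have -> : (fun e => \sum_(i <- [::] | P i) c i * f i e) = (fun _ => 0).
    by apply: functional_extensionality => e; rewrite big_nil.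
  by rewrite big_nil iter_zero.
rewrite big_cons; case Pi: (P i).
  have -> : (fun e => \sum_(j <- i :: r | P j) c j * f j e) =
     (fun e => c i * f i e + \sum_(j <- r | P j) c j * f j e).
    by apply: functional_extensionality => e; rewrite big_cons Pi.
  by rewrite iter_lin IH.
have -> : (fun e => \sum_(j <- i :: r | P j) c j * f j e) =
     (fun e => \sum_(j <- r | P j) c j * f j e).
  by apply: functional_extensionality => e; rewrite big_cons Pi.
by rewrite IH.
Qed.

Lemma rcv_lin t (Y1 : 'cV[F]_#|out_edges (s1 N)|) (Y2 : 'cV[F]_#|out_edges (s2 N)|) :
  rcv be t (src_in Y1 Y2) = Hmx be t (s1 N) *m Y1 + Hmx be t (s2 N) *m Y2.
Proof.
have -> : src_in Y1 Y2 = (fun e => 1 * (fun e =>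
     \sum_b Y1 b 0 * (fun b e => ((e == enum_val b)%:R : F)) b e) e +
     \sum_b Y2 b 0 * (fun b e => ((e == enum_val b)%:R : F)) b e).
  apply: functional_extensionality => e; rewrite /src_in mul1r.
  by congr (_ + _); apply: eq_bigr => b _; rewrite eq_sym; case: eqP; rewrite ?mulr1 ?mulr0.
apply/matrixP => a j; rewrite (ord1 j) !mxE /edge_val iter_lin mul1r.
rewrite -/(edge_val _ _) -/(edge_val _ _) !ev_sum.
by congr (_ + _); apply: eq_bigr => b _; rewrite !mxE mulrC.
Qed.

End Lin.
Section Alg.
Variable F : fieldType.

Lemma sub_rank m n (U : 'M[F]_(m,n)) d : (d <= \rank U)%N ->
  exists V : 'M[F]_(d, n), (V <= U)%MS /\ \rank V = d.
Proof.
move=> hd; exists (pid_mx d *m row_base U); split.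
  by apply: submx_trans (submxMl _ _) _; rewrite eq_row_base.
by rewrite mxrankMfree ?row_base_free // rank_pid_mx.
Qed.

Lemma L0 p q m (X : 'M[F]_(p,m)) (Y : 'M[F]_(q,m)) m1 m2
   (U : 'M[F]_(m1,m)) (W : 'M[F]_(m2,m)) d1 d2 :
  (U <= X)%MS -> (W <= Y)%MS -> (d1 <= \rank U)%N -> (d2 <= \rank W)%N ->
  \rank (U :&: W)%MS = 0%N ->
  exists (Q1 : 'M[F]_(d1,p)) (Q2 : 'M[F]_(d2,q)),
    \rank (col_mx (Q1 *m X) (Q2 *m Y)) = (d1 + d2)%N.
Proof.
move=> sUX sWY h1 h2 h0.
have [U' [sU rU]] := sub_rank h1.
have [W' [sW rW]] := sub_rank h2.
exists (U' *m pinvmx X), (W' *m pinvmx Y).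
rewrite !mulmxKpV ?(submx_trans sU) ?(submx_trans sW) //.
rewrite -addsmxE; have := mxrank_sum_cap U' W'.
have -> : \rank (U' :&: W')%MS = 0%N.
  by apply/eqP; rewrite -leqn0 -h0 mxrankS // capmxS.
by rewrite addn0 rU rW.
Qed.

Lemma L p q m (X : 'M[F]_(p,m)) (Y : 'M[F]_(q,m)) d1 d2 :
  (d1 <= \rank X)%N -> (d2 <= \rank Y)%N -> (d1 + d2 <= \rank (col_mx X Y))%N ->
  exists (Q1 : 'M[F]_(d1,p)) (Q2 : 'M[F]_(d2,q)),
    \rank (col_mx (Q1 *m X) (Q2 *m Y)) = (d1 + d2)%N.
Proof.
move=> h1 h2 h12; rewrite -addsmxE in h12.
set C := (Y :\: X)%MS.
have rC : (\rank (Y :&: X) + \rank C)%N = \rank Y := mxrank_cap_compl Y X.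
have hST := mxrank_sum_cap X Y.
have hD : (d2 - \rank C <= \rank (Y :&: X)%MS)%N. by lia.
have [D [sD rD]] := sub_rank hD.
set W := (C + D)%MS.
have CS0 : \rank (C :&: X)%MS = 0%N by rewrite capmx_diff mxrank0.
have sDX : (D <= X)%MS by apply: submx_trans sD (capmxSr _ _).
have sDY : (D <= Y)%MS by apply: submx_trans sD (capmxSl _ _).
have sCY : (C <= Y)%MS by apply: diffmxSl.
have rW : \rank W = (\rank C + \rank D)%N.
  have := mxrank_sum_cap C D.
  have -> : \rank (C :&: D)%MS = 0%N.
    by apply/eqP; rewrite -leqn0 -CS0 mxrankS // capmxS.
  by rewrite addn0.
have sWY : (W <= Y)%MS by rewrite addsmx_sub sCY.
have rSW : \rank (X + W)%MS = \rank (X + Y)%MS.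
  apply/eqP; rewrite eqn_leq mxrankS ?addsmxS //=.
  have h1' := mxrank_sum_cap X C; rewrite capmxC CS0 addn0 in h1'.
  have h2' : (\rank (X + C) <= \rank (X + W))%N by rewrite mxrankS ?addsmxS ?addsmxSl.
  rewrite capmxC in hST; lia.
set U := (X :\: W)%MS.
apply: (@L0 _ _ _ X Y _ _ U W) => //.
- exact: diffmxSl.
- have e1 : (\rank (X :&: W) + \rank U)%N = \rank X := mxrank_cap_compl X W.
  have e2 := mxrank_sum_cap X W.
  rewrite capmxC in hST; lia.
- lia.
- by rewrite capmx_diff mxrank0.
Qed.
End Alg.

Lemma fcr_inj (F : fieldType) m n (K : 'M[F]_(m, n)) (v : 'cV[F]_n) :
  \rank K = n -> K *m v = 0 -> v = 0.
Proof.
move=> rK Kv; have rf : row_free K^T by rewrite /row_free mxrank_tr rK.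
apply: trmx_inj; apply: (row_free_inj rf); rewrite /= trmx0 mul0mx -trmx_mul Kv.
by rewrite trmx0.
Qed.

Lemma rank_row_le (F : fieldType) m n1 n2 (A : 'M[F]_(m, n1)) (B : 'M[F]_(m, n2)) :
  (\rank (row_mx A B) <= \rank A + \rank B)%N.
Proof.
have := (mxrank_adds_leqif A^T B^T).1.
by rewrite addsmxE -tr_row_mx !mxrank_tr.
Qed.
Unset Implicit Arguments. Set Strict Implicit.
Local Close Scope ring_scope.

Theorem theorem3 (N : net) (HN : valid_net N)
  (Hout1 : #|out_edges (s1 N)| = k [set s1 N] [set (t1 N); (t2 N)])
  (Hout2 : #|out_edges (s2 N)| = k [set s2 N] [set (t1 N); (t2 N)])
  (Hin1 : #|in_edges (t1 N)| = k [set (s1 N); (s2 N)] [set t1 N])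
  (Hin2 : #|in_edges (t2 N)| = k [set (s1 N); (s2 N)] [set t2 N])
  (Hcut : minn (k [set (s1 N); (s2 N)] [set t1 N]) (k [set (s1 N); (s2 N)] [set t2 N])
          <= k [set s1 N] [set t2 N] + k [set s2 N] [set t1 N])
  (H12 : k [set s1 N] [set t2 N] <= k [set s1 N] [set t1 N])
  (F : finFieldType) (be : E N -> E N -> F)
  (HrH11 : \rank (Hmx be (t1 N) (s1 N)) = k [set s1 N] [set t1 N])
  (HrH12 : \rank (Hmx be (t1 N) (s2 N)) = k [set s2 N] [set t1 N])
  (HrH21 : \rank (Hmx be (t2 N) (s1 N)) = k [set s1 N] [set t2 N])
  (HrH22 : \rank (Hmx be (t2 N) (s2 N)) = k [set s2 N] [set t2 N])
  (HrH1 : \rank (row_mx (Hmx be (t1 N) (s1 N)) (Hmx be (t1 N) (s2 N)))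
          = k [set (s1 N); (s2 N)] [set t1 N])
  (HrH2 : \rank (row_mx (Hmx be (t2 N) (s1 N)) (Hmx be (t2 N) (s2 N)))
          = k [set (s1 N); (s2 N)] [set t2 N])
  (M1 : 'M[F]_(#|out_edges (s1 N)|, k [set s1 N] [set t2 N]))
  (M2 : 'M[F]_(#|out_edges (s2 N)|,
               minn (k [set (s1 N); (s2 N)] [set t1 N]) (k [set (s1 N); (s2 N)] [set t2 N])
               - k [set s1 N] [set t2 N]))
  (HM1 : \rank M1 = k [set s1 N] [set t2 N])
  (HM2 : \rank M2 = minn (k [set (s1 N); (s2 N)] [set t1 N]) (k [set (s1 N); (s2 N)] [set t2 N])
                    - k [set s1 N] [set t2 N])
  (Hdec1 : \rank (row_mx (Hmx be (t1 N) (s1 N) *m M1) (Hmx be (t1 N) (s2 N) *m M2))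
           = k [set s1 N] [set t2 N]
             + (minn (k [set (s1 N); (s2 N)] [set t1 N]) (k [set (s1 N); (s2 N)] [set t2 N])
                - k [set s1 N] [set t2 N]))
  (Hdec2 : \rank (row_mx (Hmx be (t2 N) (s1 N) *m M1) (Hmx be (t2 N) (s2 N) *m M2))
           = k [set s1 N] [set t2 N]
             + (minn (k [set (s1 N); (s2 N)] [set t1 N]) (k [set (s1 N); (s2 N)] [set t2 N])
                - k [set s1 N] [set t2 N]))
  (R1 R2 : nat)
  (HR1 : R1 <= k [set s1 N] [set t1 N])
  (HR2 : R2 <= minn (k [set (s1 N); (s2 N)] [set t1 N]) (k [set (s1 N); (s2 N)] [set t2 N])
               - k [set s1 N] [set t2 N])
  (HR12 : R1 + R2 <= \rank (row_mx (Hmx be (t1 N) (s1 N)) (Hmx be (t1 N) (s2 N) *m M2))) :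
  achievable N R1 R2.
Proof.
Local Open Scope ring_scope.
set A11 := Hmx be (t1 N) (s1 N). set A12 := Hmx be (t1 N) (s2 N).
set A21 := Hmx be (t2 N) (s1 N). set A22 := Hmx be (t2 N) (s2 N).
have rB : (minn (k [set (s1 N); (s2 N)] [set t1 N]) (k [set (s1 N); (s2 N)] [set t2 N]) - k [set s1 N] [set t2 N] <= \rank (A12 *m M2))%N.
  have := rank_row_le (A11 *m M1) (A12 *m M2); have := rank_leq_col (A11 *m M1).
  rewrite Hdec1; lia.
have rA2 : (k [set s1 N] [set t2 N] <= \rank (A21 *m M1))%N.
  have := rank_row_le (A21 *m M1) (A22 *m M2); have := rank_leq_col (A22 *m M2).
  rewrite Hdec2; lia.
have [Q1 [Q2 rQ]] := L (X := A11^T) (Y := (A12 *m M2)^T) (d1 := R1) (d2 := R2)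
   ltac:(by rewrite mxrank_tr HrH11)
   ltac:(by rewrite mxrank_tr; apply: leq_trans rB)
   ltac:(by rewrite -tr_row_mx mxrank_tr).
set K := row_mx (A11 *m Q1^T) (A12 *m (M2 *m Q2^T)).
have rK : \rank K = (R1 + R2)%N.
  by rewrite -mxrank_tr /K tr_row_mx !trmx_mul !trmxK -mulmxA -trmx_mul.
exists F, be, Q1^T, (M2 *m Q2^T); split.
- move=> U1 U1' U2 U2'; rewrite !rcv_lin -/A11 -/A12 => heq.
  have: K *m col_mx (U1 - U1') (U2 - U2') = 0.
    rewrite mul_row_col !mulmxBr !mulmxA addrACA -opprD.
    by rewrite !mulmxA in heq; rewrite heq subrr.
  move/(fcr_inj rK)/eqP; rewrite col_mx_eq0 => /andP[/eqP h _].
  exact: subr0_eq.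
- move=> U1 U1' U2 U2'; rewrite !rcv_lin -/A21 -/A22 => heq.
  set u := U1 - U1'; set v := U2 - U2'.
  have e0 : A21 *m Q1^T *m u + A22 *m M2 *m Q2^T *m v = 0.
    rewrite /u /v !mulmxBr addrACA -opprD; rewrite !mulmxA in heq; by rewrite heq subrr.
  have s1' : ((A21 *m M1)^T <= A21^T)%MS by rewrite trmx_mul submxMl.
  have s2' : (A21^T <= (A21 *m M1)^T)%MS.
    by rewrite -(geq_leqif (mxrank_leqif_sup s1')) !mxrank_tr HrH21.
  have : ((A21 *m Q1^T *m u)^T <= (A21 *m M1)^T)%MS.
    by rewrite (submx_trans _ s2') // !trmx_mul mulmxA submxMl.
  case/submxP=> D hD.
  have K2rank := Hdec2.
  have : row_mx (A21 *m M1) (A22 *m M2) *m col_mx D^T (Q2^T *m v) = 0.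
    rewrite mul_row_col -(trmxK (A21 *m M1)) -trmx_mul -hD trmxK.
    by rewrite !mulmxA.
  move/(fcr_inj K2rank)/eqP; rewrite col_mx_eq0 => /andP[_ /eqP hv].
  have : K *m col_mx 0 v = 0.
    by rewrite mul_row_col mulmx0 add0r -!mulmxA hv !mulmx0.
  move/(fcr_inj rK)/eqP; rewrite col_mx_eq0 => /andP[_ /eqP hv'].
  exact: subr0_eq.
Qed.
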